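(* Let $p\ge1$ be an integer and consider the hybrid system (2.2) associated with a consistent Runge–Kutta scheme of order $p$ for $\dot z=f(z)$ with continuous step bound $\varphi:\mathbb{R}^n\to(0,+\infty)$. Suppose: (i) there exist a Lyapunov function $V\in C^1(\mathbb{R}^n;\mathbb{R}^+)$ for $\dot z=f(z)$ and a continuous positive definite $\tilde W:\mathbb{R}^n\to\mathbb{R}^+$ such that $V(z(h,x))\le V(x)-h\tilde W(x)$ for all $x\in\mathbb{R}^n$ and $h\in[0,\varphi(x)]$; (ii) there exists $b\ge0$ with $|z(h,x)|\le\exp(b)|x|$ and $|x+hF(h,x)|\le\exp(b)|x|$ for all $x$ and $h\in[0,\varphi(x)]$; (iii) there is a continuous positive definite $C:\mathbb{R}^n\to\mathbb{R}^+$ with $|z(h,x)-x-hF(h,x)|\le C(x)h^{p+1}$ for all $x$ and $h\in[0,\varphi(x)]$, and a constant $\lambda\in(0,1)$ such that $$\varphi(x)\le\Big(\frac{(1-\lambda)\tilde W(x)}{l_V^b(x)C(x)}\Big)^{1/p}\quad\forall x\ne0,$$ where $l_V^b(x):=\max\{|\nabla V(z)|:|z|\le\exp(b)|x|\}$. Then $0\in\mathbb{R}^n$ is URGAS for (2.2). If moreover there exist $\sigma,K>0$ with $\tilde W(x)\ge2\sigma V(x)$ and $V(x)\ge K|x|^2$ for all $x$, then $0$ is robustly K-exponentially stable for (2.2).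
   Context: Standing framework: $f$ locally Lipschitz with $f(0)=0$; $z(t,x)$ is the solution of $\dot z=f(z)$ with $z(0)=x$. A consistent $s$-stage Runge–Kutta scheme has coefficients $a_{ij},b_i$ with $\sum_ib_i=1$ and is represented by $F(h,x):=\sum_{i=1}^sb_if(Y_i)$ where $Y_i=x+h\sum_{j=1}^sa_{ij}f(Y_j)$; the continuous step bound $\varphi$ is assumed small enough that these equations have a unique solution for all $h\in[0,\varphi(x)]$ and that $|F(h,x)|\le|x|M(|x|)$ for some continuous nondecreasing $M$. The hybrid system (2.2): for each locally bounded $u:\mathbb{R}^+\to\mathbb{R}^+$ and $x_0$, $\tau_0=0$, $x(0)=x_0$, $h_i=\varphi(x(\tau_i))\exp(-u(\tau_i))$, $\tau_{i+1}=\tau_i+h_i$, $x(t)=x(\tau_i)+(t-\tau_i)F(h_i,x(\tau_i))$ on $[\tau_i,\tau_{i+1}]$; solution $x(t,x_0;u)$. URGAS: (a) for every $\varepsilon>0$ there is $\delta>0$ with $|x_0|<\delta\Rightarrow|x(t,x_0;u)|<\varepsilon$ for all $t\ge0$, all $u$; (b) for every $R$, $\sup\{|x(t,x_0;u)|:t\ge0,|x_0|\le R,u\}<\infty$; (c) for all $\varepsilon,R$ there is $T$ with $|x(t,x_0;u)|\le\varepsilon$ for $t\ge T$, $|x_0|\le R$, all locally bounded $u\ge0$. Robustly K-exponentially stable: there exist $a\in K_\infty$, $\sigma>0$ with $|x(t,x_0;u)|\le e^{-\sigma t}a(|x_0|)$ for all $t,x_0,u$. A Lyapunov function for $\dot z=f(z)$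 is a positive definite, radially unbounded $C^1$ function $V$ with $\nabla V(x)f(x)<0$ for $x\ne0$. *)

(* Defs.v *)
From Stdlib Require Import Reals.
From mathcomp Require Import ssreflect ssrfun ssrbool eqtype ssrnat seq fintype bigop.
Set Implicit Arguments.
Unset Strict Implicit.
Open Scope R_scope.

Definition vec (n : nat) := 'I_n -> R.
Definition vzero {n} : vec n := fun _ => 0.
Definition vadd {n} (x y : vec n) : vec n := fun i => x i + y i.
Definition vsub {n} (x y : vec n) : vec n := fun i => x i - y i.
Definition vscale {n} (c : R) (x : vec n) : vec n := fun i => c * x i.
Definition vdot {n} (x y : vec n) : R := \big[Rplus/0]_(i < n) (x i * y i).
Definition vnorm {n} (x : vec n) : R := sqrt (vdot x x).
Definition vlin {n s : nat} (c : 'I_s -> R) (Y : 'I_s -> vec n) : vec n :=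
  fun k => \big[Rplus/0]_(j < s) (c j * Y j k).

Definition vcont {n} (g : vec n -> R) : Prop :=
  forall x eps, 0 < eps -> exists d, 0 < d /\
    forall y, vnorm (vsub y x) < d -> Rabs (g y - g x) < eps.
Definition vcontv {n} (g : vec n -> vec n) : Prop :=
  forall x eps, 0 < eps -> exists d, 0 < d /\
    forall y, vnorm (vsub y x) < d -> vnorm (vsub (g y) (g x)) < eps.
Definition loc_lipschitz {n} (f : vec n -> vec n) : Prop :=
  forall r, 0 < r -> exists L, forall x y, vnorm x <= r -> vnorm y <= r ->
    vnorm (vsub (f x) (f y)) <= L * vnorm (vsub x y).
Definition pos_def {n} (g : vec n -> R) : Prop :=
  g vzero = 0 /\ forall x, x <> vzero -> 0 < g x.
Definition radially_unbounded {n} (g : vec n -> R) : Prop :=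
  forall B, exists r, forall x, r <= vnorm x -> B <= g x.
Definition has_gradient {n} (V : vec n -> R) (gV : vec n -> vec n) : Prop :=
  forall x eps, 0 < eps -> exists d, 0 < d /\
    forall y, vnorm (vsub y x) < d ->
      Rabs (V y - V x - vdot (gV x) (vsub y x)) <= eps * vnorm (vsub y x).
Definition lyapunov {n} (f : vec n -> vec n) (V : vec n -> R) (gV : vec n -> vec n) : Prop :=
  pos_def V /\ radially_unbounded V /\ has_gradient V gV /\ vcontv gV /\
  (forall x, x <> vzero -> vdot (gV x) (f x) < 0).

Definition is_flow {n} (f : vec n -> vec n) (z : R -> vec n -> vec n) : Prop :=
  forall x, z 0 x = x /\
    (forall eps, 0 < eps -> exists d, 0 < d /\
       forall t, 0 <= t < d -> vnorm (vsub (z t x) x) < eps) /\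
    (forall t, 0 < t -> forall i, derivable_pt_lim (fun s => z s x i) t (f (z t x) i)).

Definition cont_nonneg (g : R -> R) : Prop :=
  forall r eps, 0 <= r -> 0 < eps -> exists d, 0 < d /\
    forall s, 0 <= s -> Rabs (s - r) < d -> Rabs (g s - g r) < eps.
Definition nondecr_nonneg (g : R -> R) : Prop :=
  forall r s, 0 <= r -> r <= s -> g r <= g s.
Definition Kinf (a : R -> R) : Prop :=
  a 0 = 0 /\ cont_nonneg a /\
  (forall r s, 0 <= r -> r < s -> a r < a s) /\
  (forall B, exists r, 0 <= r /\ B <= a r).

Definition RK_stages {n s : nat} (f : vec n -> vec n) (a : 'I_s -> 'I_s -> R)
  (h : R) (x : vec n) (Y : 'I_s -> vec n) : Prop :=
  forall i, Y i = vadd x (vscale h (vlin (a i) (fun j => f (Y j)))).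
Definition RK_represents {n s : nat} (f : vec n -> vec n) (a : 'I_s -> 'I_s -> R)
  (b : 'I_s -> R) (phi : vec n -> R) (F : R -> vec n -> vec n) : Prop :=
  forall x h, 0 <= h <= phi x ->
    exists Y, RK_stages f a h x Y /\
      (forall Y', RK_stages f a h x Y' -> Y' = Y) /\
      F h x = vlin b (fun j => f (Y j)).

Definition admissible (u : R -> R) : Prop :=
  (forall t, 0 <= t -> 0 <= u t) /\
  (forall T, 0 <= T -> exists B, forall t, 0 <= t <= T -> u t <= B).

Fixpoint hyb_state {n} (phi : vec n -> R) (F : R -> vec n -> vec n) (u : R -> R)
  (x0 : vec n) (i : nat) : R * vec n :=
  match i with
  | O => (0, x0)
  | S k =>
      let st := hyb_state phi F u x0 k in
      let h := phi (snd st) * exp (- u (fst st)) in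
      (fst st + h, vadd (snd st) (vscale h (F h (snd st))))
  end.
Definition hyb_tau {n} phi F u (x0 : vec n) i := fst (hyb_state phi F u x0 i).
Definition hyb_x {n} phi F u (x0 : vec n) i := snd (hyb_state phi F u x0 i).
Definition hyb_h {n} (phi : vec n -> R) F u x0 i :=
  phi (hyb_x phi F u x0 i) * exp (- u (hyb_tau phi F u x0 i)).
Definition hyb_at {n} (phi : vec n -> R) (F : R -> vec n -> vec n) (u : R -> R)
  (x0 : vec n) (t : R) (y : vec n) : Prop :=
  exists i, hyb_tau phi F u x0 i <= t <= hyb_tau phi F u x0 i + hyb_h phi F u x0 i /\
    y = vadd (hyb_x phi F u x0 i)
             (vscale (t - hyb_tau phi F u x0 i) (F (hyb_h phi F u x0 i) (hyb_x phi F u x0 i))).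

Definition hyb_complete {n} (phi : vec n -> R) (F : R -> vec n -> vec n) : Prop :=
  forall u x0, admissible u -> forall t, 0 <= t -> exists y, hyb_at phi F u x0 t y.

Definition URGAS {n} (phi : vec n -> R) (F : R -> vec n -> vec n) : Prop :=
  (forall eps, 0 < eps -> exists d, 0 < d /\
     forall u x0 t y, admissible u -> vnorm x0 < d -> 0 <= t ->
       hyb_at phi F u x0 t y -> vnorm y < eps) /\
  (forall Rad, exists B, forall u x0 t y, admissible u -> vnorm x0 <= Rad -> 0 <= t ->
       hyb_at phi F u x0 t y -> vnorm y <= B) /\
  (forall eps Rad, 0 < eps -> exists T, forall u x0 t y, admissible u ->
       vnorm x0 <= Rad -> T <= t -> hyb_at phi F u x0 t y -> vnorm y <= eps).

Definition robust_K_exp_stable {n} (phi : vec n -> R) (F : R -> vec n -> vec n) : Prop :=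
  exists (a : R -> R) (sigma : R), Kinf a /\ 0 < sigma /\
    forall u x0 t y, admissible u -> 0 <= t -> hyb_at phi F u x0 t y ->
      vnorm y <= exp (- sigma * t) * a (vnorm x0).

Definition is_lVb {n} (gV : vec n -> vec n) (b : R) (x : vec n) (m : R) : Prop :=
  (exists z, vnorm z <= exp b * vnorm x /\ vnorm (gV z) = m) /\
  (forall z, vnorm z <= exp b * vnorm x -> vnorm (gV z) <= m).

(* Main.v *)
From HB Require Import structures.
Require Import Defs.
From Stdlib Require Import Reals Lra Lia Classical ClassicalEpsilon FunctionalExtensionality.
From mathcomp Require Import ssreflect ssrfun ssrbool eqtype ssrnat seq fintype bigop.
Open Scope R_scope.
Set Implicit Arguments.
Unset Strict Implicit.
Set Warnings "-notation-overridden -redundant-canonical-projection".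

Lemma Rplus_assoc' : associative Rplus. Proof. by move=> x y z; rewrite Rplus_assoc. Qed.
HB.instance Definition _ := Monoid.isComLaw.Build R 0 Rplus Rplus_assoc' Rplus_comm Rplus_0_l.

Section Sums.
Lemma sum_add n (F G : 'I_n -> R) :
  \big[Rplus/0]_(i < n) (F i + G i) = \big[Rplus/0]_(i < n) F i + \big[Rplus/0]_(i < n) G i.
Proof. by rewrite big_split. Qed.
Lemma sum_scal n c (F : 'I_n -> R) :
  \big[Rplus/0]_(i < n) (c * F i) = c * \big[Rplus/0]_(i < n) F i.
Proof.
  symmetry; apply: (big_morph (Rmult c) (id1:=0) (op1:=Rplus)).
  - move=> x y; ring.
  - ring.
Qed.
Lemma sum_le n (F G : 'I_n -> R) : (forall i, F i <= G i) ->
  \big[Rplus/0]_(i < n) F i <= \big[Rplus/0]_(i < n) G i.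
Proof.
  move=> H; apply: (big_ind2 (fun a b => a <= b)); [lra | move=> *; lra | move=> i _; exact: H].
Qed.
Lemma sum_nonneg n (F : 'I_n -> R) : (forall i, 0 <= F i) -> 0 <= \big[Rplus/0]_(i < n) F i.
Proof. move=> H; apply: (big_ind (fun a => 0 <= a)); [lra | move=> *; lra | move=> i _; exact: H]. Qed.
Lemma sum_const n c : \big[Rplus/0]_(i < n) c = INR n * c.
Proof.
  elim: n => [|n IH]; first by rewrite big_ord0 /=; ring.
  rewrite big_ord_recr IH S_INR. change (INR n * c + c = (INR n + 1) * c). ring.
Qed.
Lemma sum_term n (F : 'I_n -> R) j : (forall i, 0 <= F i) -> F j <= \big[Rplus/0]_(i < n) F i.
Proof.
  move=> H; rewrite (bigD1 j) //=.
  match goal with |- _ <= _ + ?S => have : 0 <= S end.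
  { apply: (big_ind (fun a => 0 <= a)); [lra | move=> *; lra | move=> i _; exact: H]. }
  lra.
Qed.
End Sums.

Lemma vdot_sym n (x y : vec n) : vdot x y = vdot y x.
Proof. rewrite /vdot; apply: eq_bigr => i _; ring. Qed.
Lemma vdot_pos n (x : vec n) : 0 <= vdot x x.
Proof. apply: sum_nonneg => i; nra. Qed.
Lemma vnorm_nonneg n (x : vec n) : 0 <= vnorm x.
Proof. exact: sqrt_pos. Qed.
Lemma vnorm_sq n (x : vec n) : vnorm x * vnorm x = vdot x x.
Proof. rewrite /vnorm sqrt_sqrt //; exact: vdot_pos. Qed.

Lemma vdot_quad n (x y : vec n) t :
  vdot (vadd x (vscale t y)) (vadd x (vscale t y)) = vdot x x + 2 * t * vdot x y + t * t * vdot y y.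
Proof.
  rewrite /vdot /vadd /vscale.
  rewrite (eq_bigr (fun i => x i * x i + ((2 * t) * (x i * y i) + (t * t) * (y i * y i)))).
  2: move=> i _; ring.
  rewrite sum_add sum_add sum_scal sum_scal; ring.
Qed.

Lemma CS n (x y : vec n) : Rabs (vdot x y) <= vnorm x * vnorm y.
Proof.
  set A := vdot x x; set B := vdot y y; set D := vdot x y.
  have HA : 0 <= A by exact: vdot_pos.
  have HB : 0 <= B by exact: vdot_pos.
  have Hq : forall t, 0 <= A + 2 * t * D + t * t * B.
  { move=> t; rewrite /A /B /D -vdot_quad; exact: vdot_pos. }
  have HD : D * D <= A * B.
  { case: (Req_dec B 0) => HB0.
    - case: (Req_dec D 0) => HD0; first by rewrite HD0 HB0; lra.
      have := Hq (- (A + 1) / (2 * D)). rewrite HB0.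
      have -> : A + 2 * (- (A + 1) / (2 * D)) * D + - (A + 1) / (2 * D) * (- (A + 1) / (2 * D)) * 0 = -1.
      { field; auto. } lra.
    - have HBp : 0 < B by lra.
      have := Hq (- D / B).
      have -> : A + 2 * (- D / B) * D + - D / B * (- D / B) * B = A - D * D / B.
      { field; lra. }
      move=> H.
      have : D * D / B * B <= A * B by apply Rmult_le_compat_r; lra.
      have -> : D * D / B * B = D * D by field; lra.
      done. }
  rewrite /vnorm -sqrt_mult // -(sqrt_Rsqr (Rabs D)); last exact: Rabs_pos.
  apply: sqrt_le_1_alt. rewrite /Rsqr -Rabs_mult Rabs_pos_eq; [exact: HD | nra].
Qed.

Lemma vnorm_tri n (x y : vec n) : vnorm (vadd x y) <= vnorm x + vnorm y.
Proof.
  have Hxy : vadd x y = vadd x (vscale 1 y).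
  { apply: functional_extensionality => i; rewrite /vadd /vscale; ring. }
  have H1 : vnorm (vadd x y) * vnorm (vadd x y) <= (vnorm x + vnorm y) * (vnorm x + vnorm y).
  { rewrite vnorm_sq Hxy vdot_quad -vnorm_sq -vnorm_sq.
    have := CS x y. have := Rle_abs (vdot x y). nra. }
  have := vnorm_nonneg (vadd x y). have := vnorm_nonneg x. have := vnorm_nonneg y. nra.
Qed.

Lemma vnorm_scale n c (x : vec n) : vnorm (vscale c x) = Rabs c * vnorm x.
Proof.
  rewrite /vnorm /vdot /vscale.
  rewrite (eq_bigr (fun i => (c * c) * (x i * x i))); last by move=> i _; ring.
  rewrite sum_scal sqrt_mult; [|nra|exact: vdot_pos].
  by rewrite -/(Rsqr c) sqrt_Rsqr_abs.
Qed.

Lemma vnorm_coord n (x : vec n) i : Rabs (x i) <= vnorm x.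
Proof.
  rewrite /vnorm -(sqrt_Rsqr (Rabs (x i))); last exact: Rabs_pos.
  apply: sqrt_le_1_alt. rewrite -Rsqr_abs /Rsqr.
  apply: (sum_term (F := fun i => x i * x i)) => k; nra.
Qed.

Lemma vnorm_le_coord n (x : vec n) e : 0 <= e -> (forall i, Rabs (x i) <= e) ->
  vnorm x <= sqrt (INR n) * e.
Proof.
  move=> He H. rewrite -(sqrt_Rsqr e) // -sqrt_mult; [|exact: pos_INR| exact: Rle_0_sqr].
  apply: sqrt_le_1_alt. rewrite -sum_const. apply: sum_le => i.
  have := H i. have := Rabs_pos (x i). rewrite /Rsqr.
  move=> H1 H2. have -> : x i * x i = Rabs (x i) * Rabs (x i).
  { rewrite -Rabs_mult Rabs_pos_eq //; nra. }
  nra.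
Qed.

Lemma vnorm_zero n : vnorm (@vzero n) = 0.
Proof.
  rewrite /vnorm /vdot /vzero.
  rewrite (eq_bigr (fun i => 0 * 0)); last by [].
  rewrite sum_const; rewrite Rmult_0_r Rmult_0_r; exact: sqrt_0.
Qed.

Lemma vsub_eq n (x y : vec n) : vsub x y = vadd x (vscale (-1) y).
Proof. apply: functional_extensionality => i; rewrite /vsub /vadd /vscale; ring. Qed.

Lemma vnorm_opp n (x : vec n) : vnorm (vscale (-1) x) = vnorm x.
Proof. rewrite vnorm_scale Rabs_Ropp Rabs_R1; ring. Qed.

Lemma vnorm_sub_sym n (x y : vec n) : vnorm (vsub x y) = vnorm (vsub y x).
Proof.
  have -> : vsub x y = vscale (-1) (vsub y x).
  { apply: functional_extensionality => i; rewrite /vsub /vscale; ring. }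
  exact: vnorm_opp.
Qed.

Lemma vnorm_sub_tri n (x y z : vec n) : vnorm (vsub x z) <= vnorm (vsub x y) + vnorm (vsub y z).
Proof.
  have -> : vsub x z = vadd (vsub x y) (vsub y z).
  { apply: functional_extensionality => i; rewrite /vsub /vadd; ring. }
  exact: vnorm_tri.
Qed.

Lemma vnorm_rev n (x y : vec n) : Rabs (vnorm x - vnorm y) <= vnorm (vsub x y).
Proof.
  have H1 : vnorm x <= vnorm (vsub x y) + vnorm y.
  { have -> : x = vadd (vsub x y) y by apply: functional_extensionality => i; rewrite /vsub /vadd; ring.
    have -> : vsub (vadd (vsub x y) y) y = vsub x y by apply: functional_extensionality => i; rewrite /vsub /vadd; ring.
    exact: vnorm_tri. }
  have H2 : vnorm y <= vnorm (vsub x y) + vnorm x.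
  { rewrite vnorm_sub_sym.
    have -> : y = vadd (vsub y x) x by apply: functional_extensionality => i; rewrite /vsub /vadd; ring.
    have -> : vsub (vadd (vsub y x) x) x = vsub y x by apply: functional_extensionality => i; rewrite /vsub /vadd; ring.
    exact: vnorm_tri. }
  apply: Rabs_le; lra.
Qed.

Lemma vnorm_convex n (x y : vec n) t R : 0 <= t <= 1 -> vnorm x <= R -> vnorm y <= R ->
  vnorm (vadd x (vscale t (vsub y x))) <= R.
Proof.
  move=> Ht Hx Hy.
  have -> : vadd x (vscale t (vsub y x)) = vadd (vscale (1 - t) x) (vscale t y).
  { apply: functional_extensionality => i; rewrite /vsub /vadd /vscale; ring. }
  apply: Rle_trans; first exact: vnorm_tri.
  rewrite !vnorm_scale !Rabs_pos_eq; try lra. nra.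
Qed.
Definition cvR (u : nat -> R) l := forall e, 0 < e -> exists N, forall k, (N <= k)%coq_nat -> Rabs (u k - l) < e.
Definition vcv n (u : nat -> vec n) l := forall e, 0 < e -> exists N, forall k, (N <= k)%coq_nat -> vnorm (vsub (u k) l) < e.
Definition incr (phi : nat -> nat) := forall k, (phi k < phi (S k))%coq_nat.

Lemma fchoice (A B : Type) (P : A -> B -> Prop) : (forall a, exists b, P a b) -> exists f, forall a, P a (f a).
Proof.
  move=> H. exists (fun a => proj1_sig (constructive_indefinite_description _ (H a))).
  move=> a; exact: (proj2_sig (constructive_indefinite_description _ (H a))).
Qed.

Lemma incr_ge phi : incr phi -> forall k, (k <= phi k)%coq_nat.
Proof. move=> H; elim=> [|k IH]; first lia. have := H k; lia. Qed.
Lemma incr_mono phi : incr phi -> forall k j, (k <= j)%coq_nat -> (phi k <= phi j)%coq_nat.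
Proof. move=> H k j Hkj; elim: Hkj => [|m _ IH]; first lia. have := H m; lia. Qed.
Lemma incr_comp phi psi : incr phi -> incr psi -> incr (fun k => phi (psi k)).
Proof.
  move=> H1 H2 k. have := H2 k => h. have h1 := incr_mono H1 h.
  have := H1 (psi k). lia.
Qed.

Lemma arch_inv e : 0 < e -> exists N, forall k, (N <= k)%coq_nat -> / (INR k + 1) < e.
Proof.
  move=> He. case: (archimed_cor1 e He) => N [HN HN0]. exists N => k Hk.
  apply: Rle_lt_trans HN. apply: Rinv_le_contravar. apply: lt_0_INR. lia.
  have := le_INR _ _ Hk. lra.
Qed.

Lemma cvR_sub u l phi : cvR u l -> incr phi -> cvR (fun k => u (phi k)) l.
Proof.
  move=> H Hp e He. case: (H e He) => N HN. exists N => k Hk. apply: HN.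
  have := incr_ge Hp k. lia.
Qed.
Lemma vcv_sub n (u : nat -> vec n) l phi : vcv u l -> incr phi -> vcv (fun k => u (phi k)) l.
Proof.
  move=> H Hp e He. case: (H e He) => N HN. exists N => k Hk. apply: HN.
  have := incr_ge Hp k. lia.
Qed.

Fixpoint build (g : nat -> nat -> nat) (k : nat) : nat :=
  match k with O => g O O | S k' => g (S (build g k')) k end.

Lemma BW1 (u : nat -> R) Rb : (forall k, Rabs (u k) <= Rb) ->
  exists phi l, incr phi /\ cvR (fun k => u (phi k)) l.
Proof.
  move=> Hb.
  have Hc := compact_P3 (- Rb) Rb.
  case: (Bolzano_Weierstrass u _ Hc).
  { move=> k; have := Hb k => h; have := Rabs_pos (u k); have := Rle_abs (u k); have := Rle_abs (- u k); rewrite Rabs_Ropp; lra. }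
  move=> l Hl.
  have Hex : forall N k, exists p, (N <= p)%coq_nat /\ Rabs (u p - l) < / (INR k + 1).
  { move=> N k.
    have Hpos : 0 < / (INR k + 1) by apply: Rinv_0_lt_compat; have := pos_INR k; lra.
    case: (Hl (disc l (mkposreal _ Hpos)) N).
    - exists (mkposreal _ Hpos) => y Hy; exact Hy.
    - move=> p [Hp1 Hp2]; exists p; split => //. }
  have [g Hg] : exists g : nat -> nat -> nat, forall N k, (N <= g N k)%coq_nat /\ Rabs (u (g N k) - l) < / (INR k + 1).
  { have [f Hf] := fchoice (P := fun (Nk : nat * nat) p => (Nk.1 <= p)%coq_nat /\ Rabs (u p - l) < / (INR Nk.2 + 1)) (fun Nk => Hex Nk.1 Nk.2).
    exists (fun N k => f (N, k)) => N k; exact: (Hf (N, k)). }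
  exists (build g), l; split.
  - move=> k /=. have := (Hg (S (build g k)) (S k)).1. lia.
  - move=> e He. case: (arch_inv He) => N HN. exists N => k Hk.
    apply: Rlt_trans (HN k Hk). case: k Hk => [|k] Hk /=; [exact: (Hg 0%nat 0%nat).2 | exact: (Hg _ _).2].
Qed.

Lemma common_N n (P : 'I_n -> nat -> Prop) :
  (forall i N M, (N <= M)%coq_nat -> P i N -> P i M) -> (forall i, exists N, P i N) ->
  exists N, forall i, P i N.
Proof.
  move=> Hm H. have [f Hf] := fchoice H. exists (\max_i f i) => i.
  apply: (Hm i (f i) (\max_i f i)); last exact: Hf. apply/leP; exact: leq_bigmax.
Qed.

Lemma BWn n (u : nat -> vec n) Rb : (forall k, vnorm (u k) <= Rb) ->
  exists phi l, incr phi /\ vcv (fun k => u (phi k)) l.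
Proof.
  move=> Hb.
  have Hstep : forall m, exists phi, incr phi /\ forall i : 'I_n, (nat_of_ord i < m)%coq_nat ->
      exists li, cvR (fun k => u (phi k) i) li.
  { elim=> [|m [phi [Hphi Hc]]].
    - exists id; split; [move=> k /=; lia | move=> i Hi; lia].
    - case: (ltnP m n) => Hmn.
      + pose i0 := Ordinal Hmn.
        have [psi [l0 [Hpsi Hl0]]] : exists psi l, incr psi /\ cvR (fun k => u (phi (psi k)) i0) l.
        { apply: (BW1 (u := fun k => u (phi k) i0) (Rb := Rb)) => k.
          apply: Rle_trans (Hb _). exact: vnorm_coord. }
        exists (fun k => phi (psi k)); split; first exact: incr_comp.
        move=> i Hi. case: (Nat.eq_dec (nat_of_ord i) m) => Him.
        * have -> : i = i0 by apply: val_inj.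
          by exists l0.
        * have [li Hli] := Hc i ltac:(lia). exists li.
          exact: (cvR_sub (u := fun k => u (phi k) i)).
      + exists phi; split => // i Hi. apply: Hc. have := ltn_ord i => /ltP. move/leP: Hmn. lia. }
  have [phi [Hphi Hc]] := Hstep n.
  have [l Hl] : exists l : vec n, forall i, cvR (fun k => u (phi k) i) (l i).
  { apply: (fchoice (P := fun i li => cvR (fun k => u (phi k) i) li)) => i. apply: Hc. apply/ltP; exact: ltn_ord. }
  exists phi, l; split => // e He.
  set e' := e / (sqrt (INR n) + 1).
  have Hsq := sqrt_pos (INR n).
  have He' : 0 < e' by apply: Rdiv_lt_0_compat; lra.
  have [N HN] : exists N, forall i k, (N <= k)%coq_nat -> Rabs (u (phi k) i - l i) < e'.
  { apply: (common_N (P := fun i N => forall k, (N <= k)%coq_nat -> Rabs (u (phi k) i - l i) < e')).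
    - move=> i N M HNM H k Hk; apply: H; lia.
    - move=> i; exact: Hl. }
  exists N => k Hk.
  apply: (Rle_lt_trans _ (sqrt (INR n) * e')).
  - apply: vnorm_le_coord; first lra. move=> i; rewrite /vsub; apply: Rlt_le; exact: HN.
  - rewrite /e'. apply: (Rmult_lt_reg_r (sqrt (INR n) + 1)); first lra.
    field_simplify; [nra | lra].
Qed.

Definition closedS n (S : vec n -> Prop) := forall u l, (forall k, S (u k)) -> vcv u l -> S l.

Lemma cvR_bounds (v : nat -> R) L a b : (forall k, a <= v k <= b) -> cvR v L -> a <= L <= b.
Proof.
  move=> Hv Hc. split; apply: Rnot_lt_le => Hlt.
  - have [N HN] := Hc (a - L) ltac:(lra). have := HN N (le_n _). have := Hv N.
    move=> h1 h2; have := Rle_abs (v N - L); have := Rle_abs (-(v N - L)); rewrite Rabs_Ropp; lra.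
  - have [N HN] := Hc (L - b) ltac:(lra). have := HN N (le_n _). have := Hv N.
    move=> h1 h2; have := Rle_abs (v N - L); have := Rle_abs (-(v N - L)); rewrite Rabs_Ropp; lra.
Qed.

Lemma vcv_norm n (u : nat -> vec n) l : vcv u l -> cvR (fun k => vnorm (u k)) (vnorm l).
Proof.
  move=> H e He. have [N HN] := H e He. exists N => k Hk.
  apply: Rle_lt_trans (HN k Hk). exact: vnorm_rev.
Qed.

Lemma annulus_closed n a b : closedS (fun x : vec n => a <= vnorm x <= b).
Proof. move=> u l Hu Hc. exact: (cvR_bounds Hu (vcv_norm Hc)). Qed.

Lemma ball_closed n b : closedS (fun x : vec n => vnorm x <= b).
Proof.
  move=> u l Hu Hc. have := @annulus_closed n 0 b u l. case.
  - move=> k; split => //; exact: vnorm_nonneg.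
  - done.
  - done.
Qed.

Lemma cpt_seq n (S : vec n -> Prop) Rb : closedS S -> (forall x, S x -> vnorm x <= Rb) ->
  forall u, (forall k, S (u k)) -> exists phi l, incr phi /\ S l /\ vcv (fun k => u (phi k)) l.
Proof.
  move=> Hcl Hb u Hu. have [phi [l [Hphi Hl]]] := BWn (u := u) (Rb := Rb) (fun k => Hb _ (Hu k)).
  exists phi, l; split => //; split => //. apply: (Hcl (fun k => u (phi k))) => //.
Qed.

Lemma cont_seq n (g : vec n -> R) u l : vcont g -> vcv u l -> cvR (fun k => g (u k)) (g l).
Proof.
  move=> Hg Hc e He. have [d [Hd Hd']] := Hg l e He. have [N HN] := Hc d Hd.
  exists N => k Hk. exact: Hd' (HN k Hk).
Qed.

Lemma EVT_max n (S : vec n -> Prop) Rb (g : vec n -> R) x0 :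
  closedS S -> (forall x, S x -> vnorm x <= Rb) -> S x0 -> vcont g ->
  exists xm, S xm /\ forall x, S x -> g x <= g xm.
Proof.
  move=> Hcl Hb Hx0 Hg.
  have Hbd : exists B, forall x, S x -> g x <= B.
  { apply: NNPP => Hno.
    have H1 : forall k : nat, exists x, S x /\ INR k < g x.
    { move=> k. apply: NNPP => Hk. apply: Hno. exists (INR k) => x Hx.
      apply: Rnot_lt_le => Hlt. apply: Hk; by exists x. }
    have [u Hu] := fchoice H1.
    have [phi [l [Hphi [Hl Hc]]]] := cpt_seq Hcl Hb (fun k => (Hu k).1).
    have Hcg := cont_seq Hg Hc.
    have [N HN] := Hcg 1 Rlt_0_1.
    have [k Hk] := INR_unbounded (g l + 1).
    set j := Nat.max k N.
    have := HN j (Nat.le_max_r _ _). have := (Hu (phi j)).2.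
    have : INR k <= INR (phi j).
    { apply: le_INR. have := incr_ge Hphi j. lia. }
    move=> h1 h2 h3. have := Rle_abs (g (u (phi j)) - g l). lra. }
  have [B HB] := Hbd.
  pose E r := exists x, S x /\ r = g x.
  have [M [HM1 HM2]] : { M | is_lub E M }.
  { apply: completeness. - exists B => r [x [Hx ->]]; exact: HB.
    - exists (g x0), x0; split => //. }
  have H2 : forall k : nat, exists x, S x /\ M - / (INR k + 1) < g x.
  { move=> k. apply: NNPP => Hk.
    have Hpos : 0 < / (INR k + 1) by apply: Rinv_0_lt_compat; have := pos_INR k; lra.
    have : M <= M - / (INR k + 1).
    { apply: HM2 => r [x [Hx ->]]. apply: Rnot_lt_le => Hlt. apply: Hk; by exists x. }
    lra. }
  have [u Hu] := fchoice H2.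
  have [phi [l [Hphi [Hl Hc]]]] := cpt_seq Hcl Hb (fun k => (Hu k).1).
  exists l; split => // x Hx.
  have Hgx : g x <= M by apply: HM1; exists x.
  suff : M <= g l by lra.
  apply: Rnot_lt_le => Hlt.
  set e := (M - g l) / 2.
  have He : 0 < e by rewrite /e; lra.
  have [N1 HN1] := cont_seq Hg Hc He.
  have [N2 HN2] := arch_inv He.
  set j := Nat.max N1 N2.
  have h1 := HN1 j (Nat.le_max_l _ _).
  have h2 := HN2 (phi j) ltac:(have := incr_ge Hphi j; lia).
  have h3 := (Hu (phi j)).2.
  have := Rle_abs (g (u (phi j)) - g l). rewrite /e in h1 h2 *. lra.
Qed.

Lemma vcont_opp n (g : vec n -> R) : vcont g -> vcont (fun x => - g x).
Proof.
  move=> Hg x e He. have [d [Hd H]] := Hg x e He. exists d; split => // y Hy.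
  rewrite -Rabs_Ropp. have -> : - (- g y - - g x) = g y - g x by ring. exact: H.
Qed.

Lemma EVT_min n (S : vec n -> Prop) Rb (g : vec n -> R) x0 :
  closedS S -> (forall x, S x -> vnorm x <= Rb) -> S x0 -> vcont g ->
  exists xm, S xm /\ forall x, S x -> g xm <= g x.
Proof.
  move=> Hcl Hb Hx0 Hg. have [xm [H1 H2]] := EVT_max Hcl Hb Hx0 (vcont_opp Hg).
  exists xm; split => // x Hx. have := H2 x Hx. lra.
Qed.

Lemma pos_lb n (S : vec n -> Prop) Rb (g : vec n -> R) :
  closedS S -> (forall x, S x -> vnorm x <= Rb) -> vcont g -> (forall x, S x -> 0 < g x) ->
  exists c, 0 < c /\ forall x, S x -> c <= g x.
Proof.
  move=> Hcl Hb Hg Hp. case: (classic (exists x0, S x0)) => [[x0 Hx0]|Hne].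
  - have [xm [H1 H2]] := EVT_min Hcl Hb Hx0 Hg. exists (g xm); split => //; exact: Hp.
  - exists 1; split; first lra. move=> x Hx; exfalso; apply: Hne; by exists x.
Qed.

Lemma UC n (g : vec n -> R) Rb : vcont g -> forall e, 0 < e -> exists d, 0 < d /\
  forall x y, vnorm x <= Rb -> vnorm y <= Rb -> vnorm (vsub x y) < d -> Rabs (g x - g y) < e.
Proof.
  move=> Hg e He. apply: NNPP => Hno.
  have H1 : forall k : nat, exists xy : vec n * vec n, vnorm xy.1 <= Rb /\ vnorm xy.2 <= Rb /\
     vnorm (vsub xy.1 xy.2) < / (INR k + 1) /\ e <= Rabs (g xy.1 - g xy.2).
  { move=> k. apply: NNPP => Hk. apply: Hno.
    exists (/ (INR k + 1)); split; first by apply: Rinv_0_lt_compat; have := pos_INR k; lra.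
    move=> x y Hx Hy Hxy. apply: Rnot_le_lt => Hle. apply: Hk. exists (x, y); done. }
  have [u Hu] := fchoice H1.
  have [phi [l [Hphi [Hl Hc]]]] := cpt_seq (@ball_closed n Rb) (fun x Hx => Hx) (fun k => (Hu k).1).
  have [d [Hd Hd']] := Hg l (e / 2) ltac:(lra).
  have [N1 HN1] := Hc (d / 2) ltac:(lra).
  have [N2 HN2] := arch_inv (e := d / 2) ltac:(lra).
  set j := Nat.max N1 N2.
  have h1 := HN1 j (Nat.le_max_l _ _).
  have h2 := HN2 (phi j) ltac:(have := incr_ge Hphi j; lia).
  have [_ [_ [h3 h4]]] := Hu (phi j).
  set x := (u (phi j)).1 in h1 h3 h4. set y := (u (phi j)).2 in h3 h4.
  have hx := Hd' x ltac:(lra).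
  have hy : Rabs (g y - g l) < e / 2.
  { apply: Hd'. apply: Rle_lt_trans; first exact: (vnorm_sub_tri y x l).
    rewrite vnorm_sub_sym. lra. }
  have : Rabs (g x - g y) <= Rabs (g x - g l) + Rabs (g y - g l).
  { have -> : g x - g y = (g x - g l) + - (g y - g l) by ring.
    apply: Rle_trans; first exact: Rabs_triang. rewrite Rabs_Ropp; lra. }
  lra.
Qed.

Lemma vdot_scale_r n (g d : vec n) h : vdot g (vscale h d) = h * vdot g d.
Proof. rewrite /vdot /vscale -sum_scal; apply: eq_bigr => i _; ring. Qed.

Lemma grad_deriv n (V : vec n -> R) gV w d t : has_gradient V gV ->
  derivable_pt_lim (fun s => V (vadd w (vscale s d))) t (vdot (gV (vadd w (vscale t d))) d).
Proof.
  move=> HV eps Heps.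
  set D := vnorm d. have HD : 0 <= D := vnorm_nonneg d.
  set x := vadd w (vscale t d).
  have [d0 [Hd0 H0]] := HV x (eps / (D + 1)) ltac:(apply: Rdiv_lt_0_compat; lra).
  have Hdel : 0 < d0 / (D + 1) by apply: Rdiv_lt_0_compat; lra.
  exists (mkposreal _ Hdel) => h Hh0 Hh. simpl in Hh.
  have Hvec : vsub (vadd w (vscale (t + h) d)) x = vscale h d.
  { apply: functional_extensionality => i; rewrite /vsub /vadd /vscale /x /vadd /vscale; ring. }
  have Hn : vnorm (vsub (vadd w (vscale (t + h) d)) x) = Rabs h * D by rewrite Hvec vnorm_scale.
  have Hah : 0 < Rabs h by apply: Rabs_pos_lt.
  have Hlt : vnorm (vsub (vadd w (vscale (t + h) d)) x) < d0.
  { rewrite Hn. apply: (Rle_lt_trans _ (Rabs h * (D + 1))); first nra.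
    have : Rabs h * (D + 1) < d0 / (D + 1) * (D + 1) by apply: Rmult_lt_compat_r; lra.
    have -> : d0 / (D + 1) * (D + 1) = d0 by field; lra. done. }
  have H1 := H0 _ Hlt. rewrite Hvec vdot_scale_r vnorm_scale -/D in H1.
  have -> : (V (vadd w (vscale (t + h) d)) - V x) / h - vdot (gV x) d =
            (V (vadd w (vscale (t + h) d)) - V x - h * vdot (gV x) d) / h by field.
  rewrite /Rdiv Rabs_mult Rabs_inv -/(Rdiv _ _).
  apply: (Rmult_lt_reg_r (Rabs h)) => //.
  have -> : Rabs (V (vadd w (vscale (t + h) d)) - V x - h * vdot (gV x) d) / Rabs h * Rabs h
          = Rabs (V (vadd w (vscale (t + h) d)) - V x - h * vdot (gV x) d) by field; lra.
  apply: Rle_lt_trans H1 _.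
  have : eps / (D + 1) * D < eps.
  { apply: (Rmult_lt_reg_r (D + 1)); first lra.
    have -> : eps / (D + 1) * D * (D + 1) = eps * D by field; lra. nra. }
  nra.
Qed.

Lemma V_lip n (V : vec n -> R) gV w y m Rb : has_gradient V gV ->
  vnorm w <= Rb -> vnorm y <= Rb -> (forall z, vnorm z <= Rb -> vnorm (gV z) <= m) ->
  V y - V w <= m * vnorm (vsub y w).
Proof.
  move=> HV Hw Hy Hm.
  set d := vsub y w.
  have Hg0 : vadd w (vscale 0 d) = w by apply: functional_extensionality => i; rewrite /vadd /vscale; ring.
  have Hg1 : vadd w (vscale 1 d) = y by apply: functional_extensionality => i; rewrite /vadd /vscale /d /vsub; ring.
  have [c [Hc Hc01]] := MVT_cor2 (fun s => V (vadd w (vscale s d))) (fun s => vdot (gV (vadd w (vscale s d))) d) 0 1 Rlt_0_1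
     (fun c _ => grad_deriv w d c HV).
  rewrite Hg0 Hg1 in Hc. rewrite Hc Rminus_0_r Rmult_1_r.
  have Hz : vnorm (vadd w (vscale c d)) <= Rb by apply: vnorm_convex => //; lra.
  apply: Rle_trans; first exact: Rle_abs.
  apply: Rle_trans; first exact: CS.
  apply: Rmult_le_compat_r; first exact: vnorm_nonneg. exact: Hm.
Qed.

Lemma grad_cont n (V : vec n -> R) gV : has_gradient V gV -> vcont V.
Proof.
  move=> HV x eps Heps.
  have [d0 [Hd0 H0]] := HV x 1 Rlt_0_1.
  set G := vnorm (gV x). have HG : 0 <= G := vnorm_nonneg _.
  have Hq : 0 < eps / (G + 2) by apply: Rdiv_lt_0_compat; lra.
  exists (Rmin d0 (eps / (G + 2))); split; first by apply: Rmin_pos.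
  move=> y Hy. have Hy1 : vnorm (vsub y x) < d0 by have := Rmin_l d0 (eps / (G + 2)); lra.
  have Hy2 : vnorm (vsub y x) < eps / (G + 2) by have := Rmin_r d0 (eps / (G + 2)); lra.
  have H1 := H0 y Hy1.
  have H2 := CS (gV x) (vsub y x).
  have Hn := vnorm_nonneg (vsub y x).
  have : Rabs (V y - V x) <= Rabs (V y - V x - vdot (gV x) (vsub y x)) + Rabs (vdot (gV x) (vsub y x)).
  { have e1 : V y - V x = (V y - V x - vdot (gV x) (vsub y x)) + vdot (gV x) (vsub y x) by ring.
    rewrite {1}e1. exact: Rabs_triang. }
  have : (G + 2) * vnorm (vsub y x) < eps.
  { have : (G + 2) * vnorm (vsub y x) < (G + 2) * (eps / (G + 2)) by apply: Rmult_lt_compat_l; lra.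
    have -> : (G + 2) * (eps / (G + 2)) = eps by field; lra. done. }
  rewrite -/G in H2. nra.
Qed.

Lemma vcont_norm n (g : vec n -> vec n) : vcontv g -> vcont (fun x => vnorm (g x)).
Proof.
  move=> Hg x e He. have [d [Hd H]] := Hg x e He. exists d; split => // y Hy.
  apply: Rle_lt_trans; first exact: vnorm_rev. exact: H.
Qed.

Lemma exp_le x y : x <= y -> exp x <= exp y.
Proof. case=> [H|->]; [apply: Rlt_le; exact: exp_increasing | lra]. Qed.

Lemma vnorm0_eq n (z : vec n) : vnorm z <= 0 -> z = vzero.
Proof.
  move=> H. apply: functional_extensionality => i. rewrite /vzero.
  have := vnorm_coord z i. have := Rabs_pos (z i). move=> h1 h2.
  have := Rle_abs (z i). have := Rle_abs (- z i). rewrite Rabs_Ropp. lra.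
Qed.

Lemma sqrt_diff a b : 0 <= a -> 0 <= b -> Rabs (sqrt a - sqrt b) <= sqrt (Rabs (a - b)).
Proof.
  have key : forall a b, 0 <= b -> b <= a -> sqrt a - sqrt b <= sqrt (a - b).
  { move=> x y Hy Hyx. have h1 := sqrt_pos y. have h2 := sqrt_pos (x - y).
    have : sqrt x <= sqrt y + sqrt (x - y); last lra.
    rewrite -(sqrt_square (sqrt y + sqrt (x - y))); last lra.
    apply: sqrt_le_1_alt.
    have -> : (sqrt y + sqrt (x - y)) * (sqrt y + sqrt (x - y)) =
       sqrt y * sqrt y + sqrt (x - y) * sqrt (x - y) + 2 * sqrt y * sqrt (x - y) by ring.
    rewrite !sqrt_sqrt; try lra. nra. }
  move=> Ha Hb. case: (Rle_lt_dec b a) => Hab.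
  - rewrite (Rabs_pos_eq (a - b)); last lra. rewrite Rabs_pos_eq; last first.
    { have : sqrt b <= sqrt a by apply: sqrt_le_1_alt. lra. }
    exact: key.
  - rewrite Rabs_left1; last first.
    { have : sqrt a <= sqrt b by apply: sqrt_le_1_alt; lra. lra. }
    rewrite (Rabs_left1 (a - b)); last lra.
    have -> : - (a - b) = b - a by ring. have -> : - (sqrt a - sqrt b) = sqrt b - sqrt a by ring.
    apply: key; lra.
Qed.

Definition is_maxV n (V : vec n -> R) r m :=
  (exists z, vnorm z <= r /\ V z = m) /\ forall z, vnorm z <= r -> V z <= m.

Definition Vmax n (V : vec n -> R) r : R := epsilon (inhabits 0) (is_maxV V r).

Lemma Vmax_spec n (V : vec n -> R) r : vcont V -> 0 <= r -> is_maxV V r (Vmax V r).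
Proof.
  move=> HV Hr. apply: (epsilon_spec (inhabits 0) (is_maxV V r)).
  have Hz0 : vnorm (@vzero n) <= r by rewrite vnorm_zero.
  have [xm [H1 H2]] := EVT_max (@ball_closed n r) (fun x Hx => Hx) (x0 := vzero) (g := V) Hz0 HV.
  exists (V xm); split => //. by exists xm.
Qed.

Lemma Kinf_bound n (V : vec n -> R) cst : vcont V -> (forall x, 0 <= V x) -> V vzero = 0 -> 0 <= cst ->
  exists a, Kinf a /\ (forall r, 0 <= r -> 0 <= a r) /\ forall x, cst * sqrt (V x) <= a (vnorm x).
Proof.
  move=> HV Hpos H0 Hc.
  pose a r := cst * sqrt (Vmax V r) + r.
  have Hmono : forall r s, 0 <= r -> r <= s -> Vmax V r <= Vmax V s.
  { move=> r s Hr Hrs. have [[z [Hz1 Hz2]] _] := Vmax_spec HV Hr.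
    have [_ Hs] := Vmax_spec HV (Rle_trans _ _ _ Hr Hrs). rewrite -Hz2. apply: Hs; lra. }
  have Hnn : forall r, 0 <= r -> 0 <= Vmax V r.
  { move=> r Hr. have [_ H] := Vmax_spec HV Hr. rewrite -H0. apply: H. rewrite vnorm_zero; lra. }
  have Hcont : forall r e, 0 <= r -> 0 < e -> exists d, 0 < d /\ forall s, 0 <= s -> Rabs (s - r) < d ->
      Rabs (Vmax V s - Vmax V r) < e.
  { move=> r e Hr He.
    have [d [Hd Hd']] := @UC n V (r + 1) HV e He.
    exists (Rmin d 1); split; first by apply: Rmin_pos; lra.
    have key : forall lo hi, 0 <= lo -> lo <= hi -> hi <= r + 1 -> hi - lo < Rmin d 1 ->
        Vmax V hi - Vmax V lo < e.
    { move=> lo hi Hlo Hlh Hhi Hd2.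
      have [[zm [Hzm1 Hzm2]] _] := Vmax_spec HV (Rle_trans _ _ _ Hlo Hlh).
      have [_ Hlo'] := Vmax_spec HV Hlo.
      case: (Req_dec hi 0) => Hh0.
      - have -> : lo = hi by lra. lra.
      - pose z' := vscale (lo / hi) zm.
        have Hhp : 0 < hi by lra.
        have Hq : 0 <= lo / hi <= 1.
        { split; first by apply: Rmult_le_pos; [lra | apply: Rlt_le; apply: Rinv_0_lt_compat; lra].
          apply: (Rmult_le_reg_r hi) => //. have -> : lo / hi * hi = lo by field; lra. lra. }
        have Hz' : vnorm z' <= lo.
        { rewrite /z' vnorm_scale Rabs_pos_eq; last lra.
          have : lo / hi * vnorm zm <= lo / hi * hi by apply: Rmult_le_compat_l; lra.
          have -> : lo / hi * hi = lo by field; lra. done. }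
        have Hdist : vnorm (vsub zm z') < d.
        { have -> : vsub zm z' = vscale (1 - lo / hi) zm.
          { apply: functional_extensionality => i; rewrite /vsub /vscale /z' /vscale; ring. }
          rewrite vnorm_scale Rabs_pos_eq; last lra.
          have : (1 - lo / hi) * vnorm zm <= (1 - lo / hi) * hi by apply: Rmult_le_compat_l; lra.
          have -> : (1 - lo / hi) * hi = hi - lo by field; lra.
          have := Rmin_l d 1. lra. }
        have := Hd' zm z' ltac:(lra) ltac:(lra) Hdist.
        have := Hlo' z' Hz'. rewrite Hzm2. move=> h1 h2.
        have := Rle_abs (Vmax V hi - V z'). lra. }
    move=> s Hs Hsr.
    have Hm1 := Rmin_r d 1.
    case: (Rle_lt_dec r s) => Hrs.
    + rewrite Rabs_pos_eq; last by have := Hmono r s Hr Hrs; lra.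
      apply: key => //. rewrite Rabs_pos_eq in Hsr; lra. rewrite Rabs_pos_eq in Hsr; lra.
    + rewrite Rabs_left1; last by have := Hmono s r Hs (Rlt_le _ _ Hrs); lra.
      have -> : - (Vmax V s - Vmax V r) = Vmax V r - Vmax V s by ring.
      apply: key => //; try lra. rewrite Rabs_left1 in Hsr; lra. }
  exists a; split; [|split].
  - split; [|split; [|split]].
    + rewrite /a. have [[z [Hz1 Hz2]] _] := Vmax_spec HV (Rle_refl 0).
      rewrite -Hz2 (vnorm0_eq Hz1) H0 sqrt_0; ring.
    + move=> r e Hr He.
      set e1 := e / 2 / (cst + 1).
      have He1 : 0 < e1 by rewrite /e1; apply: Rdiv_lt_0_compat; lra.
      have [d [Hd Hd']] := Hcont r (e1 * e1) Hr ltac:(nra).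
      exists (Rmin d (e / 2)); split; first by apply: Rmin_pos; lra.
      move=> s Hs Hsr. rewrite /a.
      have hd := Rmin_l d (e / 2). have he := Rmin_r d (e / 2).
      have h1 := Hd' s Hs ltac:(lra).
      have h2 := sqrt_diff (Hnn s Hs) (Hnn r Hr).
      have h3 : sqrt (Rabs (Vmax V s - Vmax V r)) < e1.
      { rewrite -(sqrt_square e1); last lra. apply: sqrt_lt_1_alt; split => //; exact: Rabs_pos. }
      have -> : cst * sqrt (Vmax V s) + s - (cst * sqrt (Vmax V r) + r) =
                cst * (sqrt (Vmax V s) - sqrt (Vmax V r)) + (s - r) by ring.
      apply: Rle_lt_trans; first exact: Rabs_triang. rewrite Rabs_mult (Rabs_pos_eq cst) //.
      have : cst * Rabs (sqrt (Vmax V s) - sqrt (Vmax V r)) <= cst * e1.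
      { apply: Rmult_le_compat_l => //; lra. }
      have : cst * e1 <= e / 2.
      { rewrite /e1. apply: (Rmult_le_reg_r (cst + 1)); first lra.
        have -> : cst * (e / 2 / (cst + 1)) * (cst + 1) = cst * (e / 2) by field; lra. nra. }
      lra.
    + move=> r s Hr Hrs. rewrite /a.
      have := sqrt_le_1_alt _ _ (Hmono r s Hr (Rlt_le _ _ Hrs)). nra.
    + move=> B. exists (Rmax B 0); split; first exact: Rmax_r.
      rewrite /a. have := Hnn (Rmax B 0) (Rmax_r _ _). have := sqrt_pos (Vmax V (Rmax B 0)).
      have := Rmax_l B 0. nra.
  - move=> r Hr. rewrite /a. have := sqrt_pos (Vmax V r). nra.
  - move=> x. rewrite /a. have [_ H] := Vmax_spec HV (vnorm_nonneg x).
    have := sqrt_le_1_alt _ _ (H x (Rle_refl _)). have := vnorm_nonneg x. nra.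
Qed.

Lemma pd_nonneg n (g : vec n -> R) : pos_def g -> forall x, 0 <= g x.
Proof.
  move=> [H0 H] x. case: (classic (x = vzero)) => [->|Hx]; [lra | exact: Rlt_le (H x Hx)].
Qed.

Lemma vnorm_ne0 n (x : vec n) : 0 < vnorm x -> x <> vzero.
Proof. move=> H Hx; rewrite Hx vnorm_zero in H; lra. Qed.

Lemma step_dec n p (z : R -> vec n -> vec n) (phi : vec n -> R) (F : R -> vec n -> vec n)
  (V : vec n -> R) (gV : vec n -> vec n) (W : vec n -> R) bb (C : vec n -> R) lam :
  (1 <= p)%N -> has_gradient V gV -> vcontv gV -> pos_def W -> pos_def C ->
  (forall x h, 0 <= h <= phi x -> V (z h x) <= V x - h * W x) ->
  0 <= bb ->
  (forall x h, 0 <= h <= phi x ->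
     vnorm (z h x) <= exp bb * vnorm x /\
     vnorm (vadd x (vscale h (F h x))) <= exp bb * vnorm x) ->
  (forall x h, 0 <= h <= phi x ->
     vnorm (vsub (vsub (z h x) x) (vscale h (F h x))) <= C x * h ^ (p.+1)) ->
  0 < lam < 1 ->
  (forall x m, x <> vzero -> is_lVb gV bb x m ->
     phi x <= Rpower ((1 - lam) * W x / (m * C x)) (/ INR p)) ->
  forall x h, 0 <= h <= phi x -> V (vadd x (vscale h (F h x))) <= V x - lam * h * W x.
Proof.
  move=> Hp HV HgV HW HC Hz Hbb Hii Herr Hlam Hphi x h Hh.
  set Rb := exp bb * vnorm x.
  have HRb : 0 <= Rb by rewrite /Rb; have := exp_pos bb; have := vnorm_nonneg x; nra.
  have Hz0 : vnorm (@vzero n) <= Rb by rewrite vnorm_zero.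
  have [zm [Hzm1 Hzm2]] := EVT_max (@ball_closed n Rb) (fun x Hx => Hx) Hz0 (vcont_norm HgV).
  set m := vnorm (gV zm).
  have Hlvb : is_lVb gV bb x m by split; [exists zm; split | ].
  set y1 := z h x. set y2 := vadd x (vscale h (F h x)).
  have [Hy1 Hy2] := Hii x h Hh.
  have Hlip := V_lip HV Hy1 Hy2 (m := m) Hzm2.
  have Hd : vnorm (vsub y2 y1) = vnorm (vsub (vsub (z h x) x) (vscale h (F h x))).
  { have -> : vsub y2 y1 = vscale (-1) (vsub (vsub (z h x) x) (vscale h (F h x))).
    { apply: functional_extensionality => i; rewrite /vsub /vscale /y2 /y1 /vadd /vscale; ring. }
    exact: vnorm_opp. }
  have He := Herr x h Hh. rewrite -Hd in He.
  have Hm0 : 0 <= m := vnorm_nonneg _.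
  have HWx := pd_nonneg HW x. have HCx := pd_nonneg HC x.
  have Hhp : 0 <= h ^ p by apply: pow_le; lra.
  have Hpow : h ^ p.+1 = h * h ^ p by [].
  have key : m * (C x * h ^ p.+1) <= (1 - lam) * h * W x.
  { case: (classic (x = vzero)) => Hx0.
    - have -> : C x = 0 by rewrite Hx0; exact: HC.1.
      have := Rmult_le_pos _ _ (Rmult_le_pos _ _ (ltac:(lra) : 0 <= 1 - lam) (proj1 Hh)) HWx. nra.
    - have HCp : 0 < C x := HC.2 x Hx0. have HWp : 0 < W x := HW.2 x Hx0.
      case: (Req_dec m 0) => Hm.
      + rewrite Hm. have := Rmult_le_pos _ _ (Rmult_le_pos _ _ (ltac:(lra) : 0 <= 1 - lam) (proj1 Hh)) HWx. nra.
      + have Hmp : 0 < m by lra.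
        set q := (1 - lam) * W x / (m * C x).
        have Hq : 0 < q by rewrite /q; apply: Rdiv_lt_0_compat; nra.
        have Hph := Hphi x m Hx0 Hlvb. rewrite -/q in Hph.
        have HpINR : 0 < INR p by apply: lt_0_INR; move/leP: Hp; lia.
        have Hrp : 0 < Rpower q (/ INR p) by rewrite /Rpower; exact: exp_pos.
        have Hhq : h ^ p <= q.
        { have -> : q = Rpower q (/ INR p) ^ p.
          { rewrite -Rpower_pow // Rpower_mult Rinv_l; last lra. by rewrite Rpower_1. }
          apply: pow_incr; lra. }
        have : m * C x * h ^ p <= m * C x * q by apply: Rmult_le_compat_l; nra.
        have -> : m * C x * q = (1 - lam) * W x by rewrite /q; field; lra.
        rewrite Hpow. nra. }
  have := Hz x h Hh. rewrite -/y1. move=> Hzz.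
  have : m * vnorm (vsub y2 y1) <= m * (C x * h ^ p.+1) by apply: Rmult_le_compat_l.
  move: Hlip; rewrite -/y1 -/y2 => Hlip. move=> ?; lra.
Qed.

Lemma hyb_tau_S n phi F u (x0 : vec n) k :
  hyb_tau phi F u x0 k.+1 = hyb_tau phi F u x0 k + hyb_h phi F u x0 k.
Proof. reflexivity. Qed.
Lemma hyb_x_S n phi F u (x0 : vec n) k :
  hyb_x phi F u x0 k.+1 = vadd (hyb_x phi F u x0 k)
    (vscale (hyb_h phi F u x0 k) (F (hyb_h phi F u x0 k) (hyb_x phi F u x0 k))).
Proof. reflexivity. Qed.
Lemma hyb_tau_0 n phi F u (x0 : vec n) : hyb_tau phi F u x0 0 = 0.
Proof. reflexivity. Qed.
Lemma hyb_x_0 n phi F u (x0 : vec n) : hyb_x phi F u x0 0 = x0.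
Proof. reflexivity. Qed.

Lemma hyb_basic n (phi : vec n -> R) F u (x0 : vec n) : (forall x, 0 < phi x) -> admissible u ->
  forall k, 0 <= hyb_tau phi F u x0 k /\ 0 < hyb_h phi F u x0 k /\ hyb_h phi F u x0 k <= phi (hyb_x phi F u x0 k).
Proof.
  move=> Hphi [Hu1 Hu2].
  have Hh : forall k, 0 < hyb_h phi F u x0 k.
  { move=> k; rewrite /hyb_h. apply: Rmult_lt_0_compat; [exact: Hphi | exact: exp_pos]. }
  have Ht : forall k, 0 <= hyb_tau phi F u x0 k.
  { elim=> [|k IH]; first by rewrite hyb_tau_0; lra. rewrite hyb_tau_S. have := Hh k. lra. }
  move=> k; split; [exact: Ht | split; [exact: Hh|]].
  rewrite /hyb_h. have := Hu1 _ (Ht k) => h0.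
  have : exp (- u (hyb_tau phi F u x0 k)) <= 1 by rewrite -exp_0; apply: exp_le; lra.
  have := Hphi (hyb_x phi F u x0 k). have := exp_pos (- u (hyb_tau phi F u x0 k)). nra.
Qed.

Lemma hyb_dec n (phi : vec n -> R) F u (x0 : vec n) (V W : vec n -> R) lam :
  (forall x, 0 < phi x) -> admissible u ->
  (forall x h, 0 <= h <= phi x -> V (vadd x (vscale h (F h x))) <= V x - lam * h * W x) ->
  forall k, V (hyb_x phi F u x0 k.+1) <= V (hyb_x phi F u x0 k) - lam * hyb_h phi F u x0 k * W (hyb_x phi F u x0 k).
Proof.
  move=> Hphi Hu Hs k. rewrite hyb_x_S. apply: Hs.
  have [_ [h1 h2]] := hyb_basic F x0 Hphi Hu k. lra.
Qed.

Lemma hyb_mono n (phi : vec n -> R) F u (x0 : vec n) (V W : vec n -> R) lam :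
  (forall x, 0 < phi x) -> admissible u -> 0 < lam -> (forall x, 0 <= W x) ->
  (forall x h, 0 <= h <= phi x -> V (vadd x (vscale h (F h x))) <= V x - lam * h * W x) ->
  forall j k, (j <= k)%coq_nat -> V (hyb_x phi F u x0 k) <= V (hyb_x phi F u x0 j).
Proof.
  move=> Hphi Hu Hl HW Hs j k Hjk. elim: Hjk => [|m _ IH]; first lra.
  have := hyb_dec x0 Hphi Hu Hs m. have [_ [h1 _]] := hyb_basic F x0 Hphi Hu m.
  have := HW (hyb_x phi F u x0 m). move=> hw hd.
  have : 0 <= lam * hyb_h phi F u x0 m * W (hyb_x phi F u x0 m).
  { apply: Rmult_le_pos => //; apply: Rmult_le_pos; lra. }
  lra.
Qed.

Lemma hyb_at_bound n (phi : vec n -> R) F u (x0 : vec n) bb t y :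
  (forall x, 0 < phi x) -> admissible u -> 0 <= bb ->
  (forall x h, 0 <= h <= phi x -> vnorm (vadd x (vscale h (F h x))) <= exp bb * vnorm x) ->
  hyb_at phi F u x0 t y ->
  exists i, hyb_tau phi F u x0 i <= t <= hyb_tau phi F u x0 i + hyb_h phi F u x0 i /\
    vnorm y <= exp bb * vnorm (hyb_x phi F u x0 i).
Proof.
  move=> Hphi Hu Hbb Hii [i [Hti Hy]]. exists i; split => //.
  set x := hyb_x phi F u x0 i in Hy *. set h := hyb_h phi F u x0 i in Hti Hy *.
  set tau := hyb_tau phi F u x0 i in Hti Hy *.
  have [_ [Hh1 Hh2]] := hyb_basic F x0 Hphi Hu i. rewrite -/x -/h in Hh1 Hh2.
  set th := (t - tau) / h.
  have Hth : 0 <= th <= 1.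
  { rewrite /th; split.
    - apply: Rmult_le_pos; [lra | apply: Rlt_le; exact: Rinv_0_lt_compat].
    - apply: (Rmult_le_reg_r h) => //. have -> : (t - tau) / h * h = t - tau by field; lra. lra. }
  have -> : y = vadd x (vscale th (vsub (vadd x (vscale h (F h x))) x)).
  { rewrite Hy; apply: functional_extensionality => k; rewrite /vadd /vscale /vsub /th /vadd /vscale. field; lra. }
  have He : 1 <= exp bb by rewrite -exp_0; apply: exp_le.
  apply: vnorm_convex => //.
  - have := vnorm_nonneg x. nra.
  - apply: Hii; lra.
Qed.

Lemma level_bound n (V : vec n -> R) : radially_unbounded V ->
  forall L, exists r, 0 <= r /\ forall x, V x <= L -> vnorm x <= r.
Proof.
  move=> HV L. have [r Hr] := HV (L + 1). exists (Rmax r 0); split; first exact: Rmax_r.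
  move=> x Hx. apply: Rnot_lt_le => Hlt. have := Hr x ltac:(have := Rmax_l r 0; lra). lra.
Qed.

Lemma hyb_complete_lem n (phi : vec n -> R) F u (x0 : vec n) (V W : vec n -> R) lam t :
  (forall x, 0 < phi x) -> vcont phi -> admissible u -> 0 < lam -> (forall x, 0 <= W x) ->
  radially_unbounded V ->
  (forall x h, 0 <= h <= phi x -> V (vadd x (vscale h (F h x))) <= V x - lam * h * W x) ->
  0 <= t -> exists i, hyb_tau phi F u x0 i <= t <= hyb_tau phi F u x0 i + hyb_h phi F u x0 i.
Proof.
  move=> Hphi Hcp Hu Hl HW HV Hs Ht.
  have Hex : exists k, t < hyb_tau phi F u x0 k.
  { apply: NNPP => Hno.
    have Hle : forall k, hyb_tau phi F u x0 k <= t.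
    { move=> k; apply: Rnot_lt_le => H; apply: Hno; by exists k. }
    have [B HB] := Hu.2 t Ht.
    have [r [Hr0 Hr]] := level_bound HV (V x0).
    have Hxk : forall k, vnorm (hyb_x phi F u x0 k) <= r.
    { move=> k; apply: Hr. have := hyb_mono x0 Hphi Hu Hl HW Hs (le_0_n k). by rewrite hyb_x_0. }
    have [c [Hc Hc']] := pos_lb (@ball_closed n r) (fun x Hx => Hx) Hcp (fun x _ => Hphi x).
    have Hhk : forall k, c * exp (- B) <= hyb_h phi F u x0 k.
    { move=> k. rewrite /hyb_h. have [h0 _] := hyb_basic F x0 Hphi Hu k.
      have := HB _ (conj h0 (Hle k)) => hu.
      have : exp (- B) <= exp (- u (hyb_tau phi F u x0 k)) by apply: exp_le; lra.
      have := Hc' _ (Hxk k). have := exp_pos (- B). nra. }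
    have Htk : forall k, INR k * (c * exp (- B)) <= hyb_tau phi F u x0 k.
    { elim=> [|k IH]; first by rewrite hyb_tau_0 /=; lra.
      rewrite hyb_tau_S S_INR. have := Hhk k. lra. }
    have Hcb : 0 < c * exp (- B) by apply: Rmult_lt_0_compat => //; exact: exp_pos.
    have [k Hk] := INR_unbounded (t / (c * exp (- B))).
    have := Htk k. have := Hle k.
    have : t < INR k * (c * exp (- B)).
    { have : t / (c * exp (- B)) * (c * exp (- B)) < INR k * (c * exp (- B)) by apply: Rmult_lt_compat_r.
      have -> : t / (c * exp (- B)) * (c * exp (- B)) = t by rewrite /Rdiv Rmult_assoc Rinv_l; lra. done. }
    lra. }
  have [k Hk] := Hex.
  elim: k Hk => [|k IH] Hk; first by rewrite hyb_tau_0 in Hk; lra.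
  case: (Rlt_le_dec t (hyb_tau phi F u x0 k)) => H; first exact: IH.
  exists k; split => //. rewrite hyb_tau_S in Hk; lra.
Qed.

Unset Implicit Arguments.
Set Strict Implicit.

Theorem theorem4p9 (n s p : nat) (f : vec n -> vec n) (z : R -> vec n -> vec n)
  (a : 'I_s -> 'I_s -> R) (b : 'I_s -> R) (phi : vec n -> R)
  (F : R -> vec n -> vec n) (M : R -> R)
  (V : vec n -> R) (gV : vec n -> vec n) (W : vec n -> R)
  (bb : R) (C : vec n -> R) (lam : R) :
  (1 <= p)%N ->
  (* standing framework *)
  loc_lipschitz f -> f vzero = vzero -> is_flow f z ->
  \big[Rplus/0]_(i < s) b i = 1 ->
  vcont phi -> (forall x, 0 < phi x) ->
  RK_represents f a b phi F ->
  cont_nonneg M -> nondecr_nonneg M ->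
  (forall x h, 0 <= h <= phi x -> vnorm (F h x) <= vnorm x * M (vnorm x)) ->
  (* (i) *)
  lyapunov f V gV -> vcont W -> pos_def W ->
  (forall x h, 0 <= h <= phi x -> V (z h x) <= V x - h * W x) ->
  (* (ii) *)
  0 <= bb ->
  (forall x h, 0 <= h <= phi x ->
     vnorm (z h x) <= exp bb * vnorm x /\
     vnorm (vadd x (vscale h (F h x))) <= exp bb * vnorm x) ->
  (* (iii) *)
  vcont C -> pos_def C ->
  (forall x h, 0 <= h <= phi x ->
     vnorm (vsub (vsub (z h x) x) (vscale h (F h x))) <= C x * h ^ (p.+1)) ->
  0 < lam < 1 ->
  (forall x m, x <> vzero -> is_lVb gV bb x m ->
     phi x <= Rpower ((1 - lam) * W x / (m * C x)) (/ INR p)) ->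
  hyb_complete phi F /\ URGAS phi F /\
  (forall sigma K, 0 < sigma -> 0 < K ->
     (forall x, 2 * sigma * V x <= W x) ->
     (forall x, K * vnorm x ^ 2 <= V x) ->
     robust_K_exp_stable phi F).
Proof.
  move=> Hp Hlip Hf0 Hflow Hbsum Hcphi Hphipos HRK HM1 HM2 HF [HVpd [HVru [HVg [HgVc HVf]]]]
    HWc HWpd Hz Hbb Hii HCc HCpd Herr Hlam Hphi.
  have Hstep := step_dec Hp HVg HgVc HWpd HCpd Hz Hbb Hii Herr Hlam Hphi.
  have HW0 := pd_nonneg HWpd. have HV0 := pd_nonneg HVpd.
  have HVc := grad_cont HVg.
  have Hii2 : forall x h, 0 <= h <= phi x -> vnorm (vadd x (vscale h (F h x))) <= exp bb * vnorm x.
  { move=> x h H; exact: (Hii x h H).2. }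
  have Hlam0 : 0 < lam by lra.
  have Heb : 0 < exp bb := exp_pos bb.
  have Vsmall0 : forall al, 0 < al -> exists d, 0 < d /\ forall x, vnorm x < d -> V x < al.
  { move=> al Hal. have [d [Hd H]] := HVc vzero al Hal. exists d; split => // x Hx.
    have Hs : vsub x vzero = x by apply: functional_extensionality => i; rewrite /vsub /vzero; ring.
    rewrite HVpd.1 in H. have := H x ltac:(by rewrite Hs). have := Rle_abs (V x - 0). lra. }
  have Vlevel : forall eta, 0 < eta -> exists al, 0 < al /\ forall x, V x < al -> vnorm x < eta.
  { move=> eta Heta. have [R1 HR1] := HVru 1.
    set R1' := Rmax R1 eta.
    have [c [Hc Hc']] := pos_lb (@annulus_closed n eta R1') (fun x Hx => proj2 Hx) HVc
       (fun x Hx => HVpd.2 x (vnorm_ne0 (Rlt_le_trans _ _ _ Heta (proj1 Hx)))).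
    exists (Rmin c 1); split; first by apply Rmin_pos; lra.
    move=> x Hx. apply: Rnot_le_lt => Hge.
    case: (Rle_lt_dec (vnorm x) R1') => H.
    - have := Hc' x (conj Hge H). have := Rmin_l c 1. lra.
    - have := HR1 x ltac:(have := Rmax_l R1 eta; rewrite -/R1'; lra). have := Rmin_r c 1. lra. }
  have Vball : forall Rad, exists L, forall x, vnorm x <= Rad -> V x <= L.
  { move=> Rad. set Rd := Rmax Rad 0.
    have Hz0 : vnorm (@vzero n) <= Rd by rewrite vnorm_zero; exact: Rmax_r.
    have [xm [_ H]] := EVT_max (@ball_closed n Rd) (fun x Hx => Hx) Hz0 HVc.
    exists (V xm) => x Hx. apply: H. have := Rmax_l Rad 0. rewrite -/Rd. lra. }
  split; [|split; [split; [|split]|]].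
  -
    move=> u x0 Hu t Ht.
    have [i Hi] := hyb_complete_lem x0 Hphipos Hcphi Hu Hlam0 HW0 HVru Hstep Ht.
    eexists; exists i; split; [exact: Hi | reflexivity].
  -
    move=> eps Heps.
    set eta := eps / exp bb.
    have Heta : 0 < eta by apply: Rdiv_lt_0_compat.
    have [al [Hal Hal']] := Vlevel eta Heta.
    have [d [Hd Hd']] := Vsmall0 al Hal.
    exists d; split => // u x0 t y Hu Hx0 Ht Hy.
    have [i [_ Hyi]] := hyb_at_bound Hphipos Hu Hbb Hii2 Hy.
    have Hxi : V (hyb_x phi F u x0 i) < al.
    { have := hyb_mono x0 Hphipos Hu Hlam0 HW0 Hstep (le_0_n i). rewrite hyb_x_0.
      have := Hd' x0 Hx0. lra. }
    have := Hal' _ Hxi => h.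
    have : exp bb * vnorm (hyb_x phi F u x0 i) < exp bb * eta by apply: Rmult_lt_compat_l.
    have -> : exp bb * eta = eps by rewrite /eta; field; lra.
    lra.
  -
    move=> Rad. have [L HL] := Vball Rad. have [r [Hr0 Hr]] := level_bound HVru L.
    exists (exp bb * r) => u x0 t y Hu Hx0 Ht Hy.
    have [i [_ Hyi]] := hyb_at_bound Hphipos Hu Hbb Hii2 Hy.
    have : vnorm (hyb_x phi F u x0 i) <= r.
    { apply: Hr. have := hyb_mono x0 Hphipos Hu Hlam0 HW0 Hstep (le_0_n i). rewrite hyb_x_0.
      have := HL x0 Hx0. lra. }
    move=> h. have : exp bb * vnorm (hyb_x phi F u x0 i) <= exp bb * r by apply: Rmult_le_compat_l; lra.
    lra.
  -
    move=> eps Rad Heps.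
    have [L HL] := Vball Rad. have [r [Hr0 Hr]] := level_bound HVru L.
    set eta := eps / exp bb.
    have Heta : 0 < eta by apply: Rdiv_lt_0_compat.
    have [al [Hal Hal']] := Vlevel eta Heta.
    have [d [Hd Hd']] := Vsmall0 al Hal.
    have [w [Hw Hw']] := pos_lb (@annulus_closed n d r) (fun x Hx => proj2 Hx) HWc
       (fun x Hx => HWpd.2 x (vnorm_ne0 (Rlt_le_trans _ _ _ Hd (proj1 Hx)))).
    have Hz0 : vnorm (@vzero n) <= r by rewrite vnorm_zero.
    have [xm [_ Hxm]] := EVT_max (@ball_closed n r) (fun x Hx => Hx) Hz0 Hcphi.
    set Pm := phi xm.
    exists (L / (lam * w) + Pm + 1) => u x0 t y Hu Hx0 Ht Hy.
    have [i [Hti Hyi]] := hyb_at_bound Hphipos Hu Hbb Hii2 Hy.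
    set xs := hyb_x phi F u x0.
    have Hxr : forall k, vnorm (xs k) <= r.
    { move=> k. apply: Hr. have := hyb_mono x0 Hphipos Hu Hlam0 HW0 Hstep (le_0_n k). rewrite hyb_x_0.
      have := HL x0 Hx0. rewrite /xs. lra. }
    have HVx0 := HL x0 Hx0.
    have Hxi : V (xs i) < al.
    { apply: Rnot_le_lt => Hge.
      have Hall : forall j, (j <= i)%coq_nat -> w <= W (xs j).
      { move=> j Hj. apply: Hw'. split; last exact: Hxr.
        apply: Rnot_lt_le => Hlt. have := Hd' _ Hlt.
        have := hyb_mono x0 Hphipos Hu Hlam0 HW0 Hstep Hj. rewrite /xs in Hge *. lra. }
      have Hind : forall k, (k <= i)%coq_nat -> V (xs k) <= V x0 - lam * w * hyb_tau phi F u x0 k.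
      { elim=> [|k IH] Hk; first by rewrite /xs hyb_x_0 hyb_tau_0; lra.
        have := IH ltac:(lia). have := hyb_dec x0 Hphipos Hu Hstep k. have := Hall k ltac:(lia).
        have [_ [h1 _]] := hyb_basic F x0 Hphipos Hu k.
        rewrite hyb_tau_S /xs. move=> h2 h3 h4.
        have : lam * hyb_h phi F u x0 k * w <= lam * hyb_h phi F u x0 k * W (hyb_x phi F u x0 k).
        { apply: Rmult_le_compat_l => //; apply: Rmult_le_pos; lra. }
        lra. }
      have := Hind i (le_n _). have := HV0 (xs i) => hv hi.
      have Htau : hyb_tau phi F u x0 i <= L / (lam * w).
      { apply: (Rmult_le_reg_r (lam * w)); first nra.
        have -> : L / (lam * w) * (lam * w) = L by field; lra. nra. }
      have [_ [_ hh]] := hyb_basic F x0 Hphipos Hu i.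
      have := Hxm _ (Hxr i). rewrite /xs -/Pm. lra. }
    have := Hal' _ Hxi => h.
    have : exp bb * vnorm (xs i) < exp bb * eta by apply: Rmult_lt_compat_l.
    have -> : exp bb * eta = eps by rewrite /eta; field; lra.
    rewrite -/xs in Hyi. lra.
  -
    move=> sigma K Hs HK H2s HKv.
    set sg := sigma * lam.
    have Hsg : 0 < sg by rewrite /sg; nra.
    set cst := exp bb * exp (/ 2) / sqrt K.
    have HsK : 0 < sqrt K := sqrt_lt_R0 _ HK.
    have Hcst : 0 <= cst by rewrite /cst; apply: Rlt_le; apply: Rdiv_lt_0_compat => //; apply: Rmult_lt_0_compat; exact: exp_pos.
    have [ak [Hak [Hak0 Hak1]]] := Kinf_bound HVc HV0 HVpd.1 Hcst.
    exists ak, sg; split => //; split => // u x0 t y Hu Ht Hy.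
    have [i [Hti Hyi]] := hyb_at_bound Hphipos Hu Hbb Hii2 Hy.
    set xs := hyb_x phi F u x0. set tau := hyb_tau phi F u x0. set hh := hyb_h phi F u x0.
    have Hdec : forall k, V (xs k.+1) <= V (xs k) * (1 - 2 * sg * hh k).
    { move=> k. have := hyb_dec x0 Hphipos Hu Hstep k. have := H2s (xs k).
      have [_ [h1 _]] := hyb_basic F x0 Hphipos Hu k. rewrite /xs /hh /sg.
      move=> h2 h3. have : lam * hyb_h phi F u x0 k * (2 * sigma * V (hyb_x phi F u x0 k)) <=
          lam * hyb_h phi F u x0 k * W (hyb_x phi F u x0 k).
      { apply: Rmult_le_compat_l => //; apply: Rmult_le_pos; lra. }
      lra. }
    have Hexp : forall k, V (xs k) <= V x0 * exp (- 2 * sg * tau k).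
    { elim=> [|k IH]; first by rewrite /xs /tau hyb_x_0 hyb_tau_0 Rmult_0_r exp_0; lra.
      have := Hdec k. have := exp_ineq1_le (- (2 * sg * hh k)). have := HV0 (xs k).
      have He1 : exp (- 2 * sg * tau k.+1) = exp (- 2 * sg * tau k) * exp (- (2 * sg * hh k)).
      { rewrite -exp_plus /tau hyb_tau_S /hh. f_equal. ring. }
      rewrite He1. move=> h1 h2 h3.
      have : V (xs k) * (1 - 2 * sg * hh k) <= V (xs k) * exp (- (2 * sg * hh k)).
      { apply: Rmult_le_compat_l => //; lra. }
      have : V (xs k) * exp (- (2 * sg * hh k)) <= V x0 * exp (- 2 * sg * tau k) * exp (- (2 * sg * hh k)).
      { apply: Rmult_le_compat_r => //; apply: Rlt_le; exact: exp_pos. }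
      lra. }
    have Hay := Hak1 x0.
    have Hak0' := Hak0 _ (vnorm_nonneg x0).
    have Hexpt := exp_pos (- sg * t).
    case: (Rle_lt_dec (V (xs i)) 0) => HVi.
    + have := HKv (xs i). have := vnorm_nonneg (xs i). move=> h1 h2.
      have e2 : vnorm (xs i) ^ 2 = vnorm (xs i) * vnorm (xs i) by ring. rewrite e2 in h2.
      have : vnorm (xs i) = 0.
      { case: h1 => // hlt. have := Rmult_lt_0_compat _ _ (Rmult_lt_0_compat _ _ HK hlt) hlt. lra. }
      move=> h3. rewrite /xs in h3. rewrite h3 Rmult_0_r in Hyi. nra.
    + have Hhi : hh i <= / (2 * sg).
      { have := Hdec i. have := HV0 (xs i.+1). move=> h1 h2.
        have : 0 <= 1 - 2 * sg * hh i.
        { apply: Rnot_lt_le => Hlt. have : V (xs i) * (1 - 2 * sg * hh i) < 0.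
          { have := Rmult_lt_compat_l _ _ _ HVi Hlt. lra. }
          lra. }
        move=> h3. apply: (Rmult_le_reg_l (2 * sg)); first lra.
        rewrite Rinv_r; lra. }
      set E := exp (- sg * tau i).
      have HE : 0 < E := exp_pos _.
      have HE2 : exp (- 2 * sg * tau i) = E * E.
      { rewrite /E -exp_plus. f_equal. ring. }
      have Hxi : vnorm (xs i) <= sqrt (V x0) / sqrt K * E.
      { have HVx0 := HV0 x0.
        have hq : vnorm (xs i) ^ 2 <= V x0 / K * (E * E).
        { have := HKv (xs i). have := Hexp i. rewrite HE2. move=> h1 h2.
          apply: (Rmult_le_reg_l K) => //. have -> : K * (V x0 / K * (E * E)) = V x0 * (E * E) by field; lra.
          lra. }
        have hs : (sqrt (V x0) / sqrt K * E) ^ 2 = V x0 / K * (E * E).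
        { have -> : (sqrt (V x0) / sqrt K * E) ^ 2 = (sqrt (V x0) * sqrt (V x0)) / (sqrt K * sqrt K) * (E * E)
            by field; lra.
          rewrite !sqrt_sqrt //; lra. }
        have h0 : 0 <= sqrt (V x0) / sqrt K * E.
        { apply: Rmult_le_pos; last lra. apply: Rmult_le_pos; first exact: sqrt_pos.
          apply: Rlt_le; exact: Rinv_0_lt_compat. }
        have := vnorm_nonneg (xs i). rewrite -hs in hq. nra. }
      have HEt : E <= exp (- sg * t) * exp (/ 2).
      { rewrite /E -exp_plus. apply: exp_le. rewrite /tau /hh in Hti Hhi *.
        have : sg * t <= sg * (hyb_tau phi F u x0 i + / (2 * sg)) by apply: Rmult_le_compat_l; lra.
        have -> : sg * (hyb_tau phi F u x0 i + / (2 * sg)) = sg * hyb_tau phi F u x0 i + / 2 by field; lra.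
        lra. }
      have Hs0 : 0 <= sqrt (V x0) / sqrt K.
      { apply: Rmult_le_pos; first exact: sqrt_pos. apply: Rlt_le; exact: Rinv_0_lt_compat. }
      have : vnorm y <= exp bb * (sqrt (V x0) / sqrt K * (exp (- sg * t) * exp (/ 2))).
      { apply: Rle_trans; first exact: Hyi. apply: Rmult_le_compat_l; first lra.
        apply: Rle_trans; first exact: Hxi. apply: Rmult_le_compat_l => //. }
      have -> : exp bb * (sqrt (V x0) / sqrt K * (exp (- sg * t) * exp (/ 2))) =
         exp (- sg * t) * (cst * sqrt (V x0)) by rewrite /cst; field; lra.
      move=> h. apply: Rle_trans h _. apply: Rmult_le_compat_l; lra.
Qed.
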